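(* Let $\alpha\in\mathbb{C}$ and $\beta\in\mathbb{C}\setminus\{q^{-n}:n\in\mathbb{N}_0\}$. Writing $\mathbf{H}_6=\mathbf{H}_6(\alpha;\beta;q,x,y)$ and $P=(1-\beta)(1-\beta q)$: (i) $\mathbf{H}_6(\alpha q;\beta q;q,x,y)=\mathbf{H}_6+\frac{(\alpha-\beta)x(1-\alpha q)}{P}\mathbf{H}_6(\alpha q^2;\beta q^2;q,x,y)+\frac{(\alpha-\beta)y}{P}\mathbf{H}_6(\alpha q;\beta q^2;q,xq,y)+\frac{\alpha xq(1-\alpha q)}{1-\beta q}\mathbf{H}_6(\alpha q^2;\beta q^2;q,xq,yq)$; (ii) $\mathbf{H}_6(\alpha q;\beta q;q,x,y)=\mathbf{H}_6+\frac{\alpha y}{P}\mathbf{H}_6(\alpha q;\beta q^2;q,x,y)+\frac{\alpha xq(1-\alpha q)}{1-\beta q}\mathbf{H}_6(\alpha q^2;\beta q^2;q,xq,yq)+\frac{\alpha x(1-\alpha q)}{P}\mathbf{H}_6(\alpha q^2;\beta q^2;q,x,yq)-\frac{\beta x(1-\alpha q)}{P}\mathbf{H}_6(\alpha q^2;\beta q^2;q,x,y)-\frac{\beta y}{P}\mathbf{H}_6(\alpha q;\beta q^2;q,xq,y)$; (iii) $\mathbf{H}_6(\alpha q;\beta q;q,x,y)=\mathbf{H}_6+\frac{\alpha x(1-\alpha q)}{P}\mathbf{H}_6(\alpha q^2;\beta q^2;q,x,y)+\frac{\alpha y}{P}\mathbf{H}_6(\alpha q;\beta q^2;q,xq,y)+\frac{\alpha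 xq(1-\alpha q)}{1-\beta q}\mathbf{H}_6(\alpha q^2;\beta q^2;q,xq,yq)-\frac{\beta y}{P}\mathbf{H}_6(\alpha q;\beta q^2;q,x,y)-\frac{\beta x(1-\alpha q)}{P}\mathbf{H}_6(\alpha q^2;\beta q^2;q,x,yq)$; (iv) $\mathbf{H}_6(\alpha q;\beta q;q,x,y)=\mathbf{H}_6+\frac{(\alpha-\beta)y}{P}\mathbf{H}_6(\alpha q;\beta q^2;q,x,y)+\frac{(\alpha-\beta)x(1-\alpha q)}{P}\mathbf{H}_6(\alpha q^2;\beta q^2;q,x,yq)+\frac{\alpha xq(1-\alpha q)}{1-\beta q}\mathbf{H}_6(\alpha q^2;\beta q^2;q,xq,yq)$.
   Context: Fix $q\in\mathbb{C}$ with $0<|q|<1$. For $a\in\mathbb{C}$ and $n\in\mathbb{N}_0$, $(a;q)_0=1$, $(a;q)_n=\prod_{k=0}^{n-1}(1-aq^k)$. For $\alpha\in\mathbb{C}$ and $\beta\in\mathbb{C}\setminus\{q^{-n}:n\in\mathbb{N}_0\}$: $\mathbf{H}_6(\alpha;\beta;q,x,y)=\sum_{r,s\ge0}\frac{(\alpha;q)_{2r+s}}{(\beta;q)_{r+s}(q;q)_r(q;q)_s}x^ry^s$. Expressions such as $\mathbf{H}_6(\alpha;\beta;q,xq,yq)$ denote the series with $x,y$ replaced by $qx,qy$. Identities are of formal power series in $x,y$. *)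

(* Defs.v *)
From HB Require Import structures.
From mathcomp Require Import all_boot all_order all_algebra.
From mathcomp Require Import complex reals.
Set Implicit Arguments. Unset Strict Implicit. Unset Printing Implicit Defensive.
Import Order.TTheory GRing.Theory Num.Theory.
Local Open Scope ring_scope.

Definition qpoch {C : comRingType} (a q : C) (n : nat) : C :=
  \prod_(k < n) (1 - a * q ^+ k).

(* Formal power series in two variables x,y over C, as coefficient arrays:
   F r s is the coefficient of x^r y^s. *)
Definition fps (C : Type) := nat -> nat -> C.

Definition fps_add {C : comRingType} (F G : fps C) : fps C :=
  fun r s => F r s + G r s.
Definition fps_sub {C : comRingType} (F G : fps C) : fps C :=
  fun r s => F r s - G r s.
Definition fps_scale {C : comRingType} (c : C) (F : fps C) : fps C :=
  fun r s => c * F r s.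
Definition fps_mulX {C : comRingType} (F : fps C) : fps C :=
  fun r s => if r is r'.+1 then F r' s else 0.
Definition fps_mulY {C : comRingType} (F : fps C) : fps C :=
  fun r s => if s is s'.+1 then F r s' else 0.

(* H6(alpha;beta;q, cx*x, cy*y) as a formal power series in x, y:
   coefficient of x^r y^s is (alpha;q)_{2r+s} / ((beta;q)_{r+s} (q;q)_r (q;q)_s) cx^r cy^s.
   So H6(alpha;beta;q,x,y) = H6 alpha beta q 1 1 and H6(..;q,xq,y) = H6 .. q q 1. *)
Definition H6 {C : fieldType} (alpha beta q cx cy : C) : fps C :=
  fun r s => qpoch alpha q (2 * r + s) /
             (qpoch beta q (r + s) * qpoch q q r * qpoch q q s)
             * cx ^+ r * cy ^+ s.

(* Main.v *)
Require Import Defs.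
From HB Require Import structures.
From mathcomp Require Import all_boot all_order all_algebra.
From mathcomp Require Import complex reals.
From mathcomp Require Import ring lra.
From Stdlib Require Import FunctionalExtensionality.
Import Order.TTheory GRing.Theory Num.Theory.
Local Open Scope ring_scope.
Local Open Scope complex_scope.

Section L.
Context {C : fieldType}.
Implicit Types a q : C.
Lemma qp0 a q : qpoch a q 0 = 1.
Proof. by rewrite /qpoch big_ord0. Qed.
Lemma qtail a q n : qpoch a q n.+1 = qpoch a q n * (1 - a * q ^+ n).
Proof. by rewrite /qpoch big_ord_recr. Qed.
Lemma qpeel a q n : qpoch a q n.+1 = (1 - a) * qpoch (a * q) q n.
Proof.
rewrite /qpoch big_ord_recl expr0 mulr1; congr (_ * _).
by apply: eq_bigr => i _; rewrite exprS mulrA.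
Qed.
Lemma qaq a q n : qpoch (a * q) q n.+1 = (1 - a * q) * qpoch (a * q ^+ 2) q n.
Proof. by rewrite qpeel -mulrA -expr2. Qed.
Lemma qshift a q n : 1 - a * q ^+ n != 0 ->
  qpoch a q n = (1 - a) * qpoch (a * q) q n / (1 - a * q ^+ n).
Proof. by move=> h; rewrite -qpeel qtail mulfK. Qed.
Lemma qshiftq a q n : 1 - a * q * q ^+ n != 0 ->
  qpoch (a * q) q n = (1 - a * q) * qpoch (a * q ^+ 2) q n / (1 - a * q * q ^+ n).
Proof. by move=> h; rewrite qshift // [in RHS]expr2 [a * (q * q)]mulrA. Qed.
Lemma qp_neq0 a q n : (forall k, (k < n)%N -> 1 - a * q ^+ k != 0) -> qpoch a q n != 0.
Proof.
move=> h; rewrite /qpoch; apply/prodf_neq0 => i _; exact: h.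
Qed.
Lemma pow2n q n : q ^+ (2 * n) = q ^+ n * q ^+ n.
Proof. by rewrite mul2n -addnn exprD. Qed.
End L.

Ltac nz := rewrite ?expr0 ?mulr1;
  first [ assumption | match goal with H : forall n : nat, _ |- _ => solve [apply: H] end ].
Ltac nzall := repeat (apply/andP; split); nz.
Ltac finish := rewrite ?qp0 ?expr0 ?expr1n; rewrite ?exprS ?exprD ?pow2n;
  field; nzall.
Ltac norm_all alpha beta q :=
  rewrite ?muln0 ?mul0n ?add0n ?addn0 ?mulnS ?add2n ?addSn ?addnS;
  lazymatch goal with
  | |- context [qpoch alpha q (2 * ?r + ?s).+3] =>
      rewrite (qpeel alpha) !(qaq alpha) (qtail (alpha * q ^+ 2) q (2 * r + s).+1)
        (qpeel beta) !(qaq beta) (qtail (beta * q ^+ 2) q (r + s)) !(qtail q q);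
      finish
  | |- context [qpoch alpha q (2 * ?r).+2] =>
      rewrite (qpeel alpha) !(qaq alpha) (qtail (alpha * q ^+ 2) q (2 * r))
        (qpeel beta) !(qaq beta) (qshiftq beta q r); [ rewrite !(qtail q q); finish | nz ]
  | |- context [qpoch alpha q ?s.+1] =>
      rewrite (qpeel alpha) (qtail (alpha * q) q s)
        (qpeel beta) !(qaq beta) (qshiftq beta q s); [ rewrite !(qtail q q); finish | nz ]
  | _ => finish
  end.

Theorem theorem2p7 (R : realType) (q alpha beta : R[i])
  (hq0 : 0 < `|q|) (hq1 : `|q| < 1)
  (hbeta : forall n : nat, beta != q ^- n) :
  let P := (1 - beta) * (1 - beta * q) in
  let H := H6 alpha beta q 1 1 in
  let LHS := H6 (alpha * q) (beta * q) q 1 1 in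
  [/\
  (* (i) *)
   LHS = fps_add (fps_add (fps_add H
     (fps_scale ((alpha - beta) * (1 - alpha * q) / P)
        (fps_mulX (H6 (alpha * q ^+ 2) (beta * q ^+ 2) q 1 1))))
     (fps_scale ((alpha - beta) / P)
        (fps_mulY (H6 (alpha * q) (beta * q ^+ 2) q q 1))))
     (fps_scale (alpha * q * (1 - alpha * q) / (1 - beta * q))
        (fps_mulX (H6 (alpha * q ^+ 2) (beta * q ^+ 2) q q q))),
  (* (ii) *)
   LHS = fps_sub (fps_sub (fps_add (fps_add (fps_add H
     (fps_scale (alpha / P)
        (fps_mulY (H6 (alpha * q) (beta * q ^+ 2) q 1 1))))
     (fps_scale (alpha * q * (1 - alpha * q) / (1 - beta * q))
        (fps_mulX (H6 (alpha * q ^+ 2) (beta * q ^+ 2) q q q))))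
     (fps_scale (alpha * (1 - alpha * q) / P)
        (fps_mulX (H6 (alpha * q ^+ 2) (beta * q ^+ 2) q 1 q))))
     (fps_scale (beta * (1 - alpha * q) / P)
        (fps_mulX (H6 (alpha * q ^+ 2) (beta * q ^+ 2) q 1 1))))
     (fps_scale (beta / P)
        (fps_mulY (H6 (alpha * q) (beta * q ^+ 2) q q 1))),
  (* (iii) *)
   LHS = fps_sub (fps_sub (fps_add (fps_add (fps_add H
     (fps_scale (alpha * (1 - alpha * q) / P)
        (fps_mulX (H6 (alpha * q ^+ 2) (beta * q ^+ 2) q 1 1))))
     (fps_scale (alpha / P)
        (fps_mulY (H6 (alpha * q) (beta * q ^+ 2) q q 1))))
     (fps_scale (alpha * q * (1 - alpha * q) / (1 - beta * q))
        (fps_mulX (H6 (alpha * q ^+ 2) (beta * q ^+ 2) q q q))))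
     (fps_scale (beta / P)
        (fps_mulY (H6 (alpha * q) (beta * q ^+ 2) q 1 1))))
     (fps_scale (beta * (1 - alpha * q) / P)
        (fps_mulX (H6 (alpha * q ^+ 2) (beta * q ^+ 2) q 1 q)))
  &
  (* (iv) *)
   LHS = fps_add (fps_add (fps_add H
     (fps_scale ((alpha - beta) / P)
        (fps_mulY (H6 (alpha * q) (beta * q ^+ 2) q 1 1))))
     (fps_scale ((alpha - beta) * (1 - alpha * q) / P)
        (fps_mulX (H6 (alpha * q ^+ 2) (beta * q ^+ 2) q 1 q))))
     (fps_scale (alpha * q * (1 - alpha * q) / (1 - beta * q))
        (fps_mulX (H6 (alpha * q ^+ 2) (beta * q ^+ 2) q q q)))].
Proof.
have hq : q != 0 by rewrite -normr_gt0.
have hqn : forall n, 1 - q ^+ n.+1 != 0.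
  move=> n; rewrite subr_eq0; apply/eqP => /(congr1 (fun z => `|z|)).
  rewrite normrX normr1 => h.
  have : `|q| ^+ n.+1 < 1 by rewrite exprn_ilt1.
  by rewrite h ltxx.
have hqq : forall n, 1 - q * q ^+ n != 0 by move=> n; rewrite -exprS.
have hb : forall n, 1 - beta * q ^+ n != 0.
  move=> n; rewrite subr_eq0; apply/eqP => h; move: (hbeta n).
  have hu : q ^+ n != 0 by rewrite expf_neq0.
  by rewrite -exprVn exprVn -[beta](mulfK hu) -h mul1r eqxx.
have hb0 : 1 - beta != 0 by move: (hb 0%N); rewrite expr0 mulr1.
have hb1 : 1 - beta * q != 0 by move: (hb 1%N); rewrite expr1.
have hQ : forall n, qpoch q q n != 0 by move=> n; apply: qp_neq0 => k _.
have hBq : forall n, qpoch (beta * q ^+ 2) q n != 0.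
  by move=> n; apply: qp_neq0 => k _; rewrite -mulrA -exprD.
have hb2 : forall n m, 1 - beta * (q * q) * (q ^+ n * q ^+ m) != 0.
  by move=> n m; rewrite -expr2 -mulrA -!exprD.
have hbq : forall n, 1 - beta * q * q ^+ n != 0.
  by move=> n; rewrite -mulrA -exprS.
have hBqq : forall n, qpoch (beta * (q * q)) q n != 0.
  by move=> n; rewrite -expr2.
move=> P H LHS; rewrite /P /H /LHS.
split; apply: functional_extensionality => r; apply: functional_extensionality => s;
  rewrite /fps_add /fps_sub /fps_scale /fps_mulX /fps_mulY /H6;
  (case: r => [|r]; case: s => [|s]); norm_all alpha beta q.
Qed.
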